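(* Let $m$ be a positive integer and $G$ a connected, almost asymmetric graph. If $n(G)-\max\{|v^*|:\ v^*\in V(G^* )\}\neq m$, then $D(G)\neq n(G)-m$.
   Context: All graphs are finite and simple; $n(G)=|V(G)|$; $N_G(u)$ is the neighborhood of $u$. A distinguishing coloring of a graph $G$ is a (not necessarily proper) vertex coloring such that the only automorphism of $G$ mapping every vertex to a vertex of the same color is the identity; the distinguishing number $D(G)$ is the minimum number of colors in a distinguishing coloring of $G$. Two distinct vertices $u,v$ are twins if $N_G(u)\setminus\{v\}=N_G(v)\setminus\{u\}$. The relation $u\equiv v$ iff $u=v$ or $u,v$ are twins is an equivalence relation; the class of $v$ is denoted $v^*$. The twin graph $G^*$ has the equivalence classes as vertices, distinct classes $u^*,v^*$ being adjacent iff $uv\in E(G)$. A graph $G$ is almost asymmetric if no automorphism of $G$ maps a vertex of one twin class to a vertex of a different twin class. *)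

(* Defs.v *)
(* A finite simple graph is a symmetric irreflexive relation
   e on a finType T. *)
From mathcomp Require Import all_boot all_order all_algebra all_fingroup.
Set Implicit Arguments. Unset Strict Implicit. Unset Printing Implicit Defensive.

Section Graphs.
Variables (T : finType) (e : rel T).

Definition order_of_graph : nat := #|T|.

Definition nbhd (u : T) : {set T} := [set w | e u w].

Definition is_aut (s : {perm T}) : bool := [forall x, forall y, e (s x) (s y) == e x y].

Definition distinguishing (k : nat) (c : T -> 'I_k) : bool :=
  [forall s : {perm T}, (is_aut s && [forall x, c (s x) == c x]) ==> (s == 1%g)].

Definition has_dist_coloring (k : nat) : bool :=
  [exists c : {ffun T -> 'I_k}, distinguishing c].

Lemma has_dist_coloring_card : has_dist_coloring #|T|.
Proof.
apply/existsP; exists (finfun (@enum_rank T)).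
apply/forallP => s; apply/implyP => /andP [_ /forallP H].
apply/eqP/permP => x; rewrite perm1.
by have /eqP := H x; rewrite !ffunE => /enum_rank_inj.
Qed.

Lemma has_dist_coloring_ex : exists k, has_dist_coloring k.
Proof. by exists #|T|; exact: has_dist_coloring_card. Qed.

Definition dist_number : nat := ex_minn has_dist_coloring_ex.

Definition twins (u v : T) : bool :=
  (u != v) && (nbhd u :\ v == nbhd v :\ u).

Definition twin_class (v : T) : {set T} := [set u | (u == v) || twins u v].

(* maximum size of a twin class, i.e. max |v^ * | over classes of G^ * *)
Definition max_twin_class_size : nat := (\max_(v : T) #|twin_class v|)%N.

Definition almost_asymmetric : Prop :=
  forall s : {perm T}, is_aut s -> forall v, twin_class (s v) = twin_class v.

Definition connected_graph : Prop := forall x y : T, connect e x y.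

End Graphs.

(* Main.v *)
Require Import Defs.
From mathcomp Require Import all_boot all_order all_algebra all_fingroup.
From mathcomp Require Import ring.

Section Aux.
Variables (T : finType) (e : rel T).
Hypotheses (esym : symmetric e) (eirr : irreflexive e).

Lemma twinsE {u w} : twins e u w ->
  forall z, z != u -> z != w -> e u z = e w z.
Proof.
case/andP=> _ /eqP H z zu zw.
have := congr1 (fun A : {set T} => z \in A) H => /=.
rewrite /nbhd !in_setD !in_set1 !in_set zu zw. done.
Qed.

Lemma twinsI u w : u != w -> (forall z, z != u -> z != w -> e u z = e w z) ->
  twins e u w.
Proof.
move=> uw H; rewrite /twins uw /=; apply/eqP/setP => z.
rewrite !inE.
case: (eqVneq z w) => [->|zw] /=; first by rewrite eirr andbF.
case: (eqVneq z u) => [->|zu] /=; first by rewrite eirr.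
by rewrite H.
Qed.

Lemma twins_sym u w : twins e u w -> twins e w u.
Proof.
move=> H; have uw : u != w by case/andP: H.
apply: twinsI; first by rewrite eq_sym.
by move=> z zw zu; rewrite (twinsE H).
Qed.

Lemma twins_trans u v w : twins e u v -> twins e w v -> u != w -> twins e u w.
Proof.
move=> Huv Hwv uw.
have uv : u != v by case/andP: Huv.
have wv : w != v by case/andP: Hwv.
apply: twinsI => // z zu zw.
case: (eqVneq z v) => [->|zv].
  have h1 : e u w = e v w by apply: (twinsE Huv); rewrite // eq_sym.
  have h2 : e w u = e v u by apply: (twinsE Hwv); rewrite // eq_sym.
  by rewrite esym -h2 esym h1 esym.
by rewrite (twinsE Huv) // (twinsE Hwv).
Qed.

Lemma tperm_aut u w : twins e u w -> is_aut e (tperm u w).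
Proof.
move=> H; have uw : u != w by case/andP: H.
have K z : z != u -> z != w -> e u z = e w z by apply: twinsE.
apply/forallP => x; apply/forallP => y; apply/eqP.
case: tpermP => [->|->|xu xw]; case: tpermP => [->|->|yu yw] //.
- by rewrite !eirr.
- by rewrite K //; apply/eqP.
- by rewrite !eirr.
- by rewrite K //; apply/eqP.
- by rewrite [e x w]esym [e x u]esym K //; apply/eqP.
- by rewrite [e x w]esym [e x u]esym K //; apply/eqP.
Qed.


Lemma in_own_class x : x \in twin_class e x.
Proof. by rewrite inE eqxx. Qed.

Lemma class_bound x : index x (enum (twin_class e x)) < max_twin_class_size e.
Proof.
apply: (leq_trans _ (leq_bigmax x)).
by rewrite cardE index_mem mem_enum in_own_class.
Qed.

Lemma dist_eq_max : almost_asymmetric e ->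
  dist_number e = max_twin_class_size e.
Proof.
move=> AA; rewrite /dist_number.
case: ex_minnP => D HD Hmin.
apply/eqP; rewrite eqn_leq; apply/andP; split.
  apply: Hmin; apply/existsP.
  exists [ffun x => Ordinal (class_bound x)].
  apply/forallP => s; apply/implyP => /andP [Has /forallP Hc].
  apply/eqP/permP => x; rewrite perm1.
  have /eqP := Hc x; rewrite !ffunE => /(congr1 val) /=.
  rewrite (AA s Has x) => /(index_inj x); apply.
    by rewrite mem_enum -(AA s Has x) in_own_class.
  by rewrite mem_enum in_own_class.
case/existsP: HD => c Hc.
case: (posnP #|T|) => [T0|Tpos].
  rewrite /max_twin_class_size big_pred0 // => x.
  by have := card0_eq T0 x.
rewrite /max_twin_class_size; have [v ->] := eq_bigmax (fun v => #|twin_class e v|) Tpos.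
rewrite leqNgt; apply/negP => Hlt.
case: (boolP [exists u, exists w, [&& u \in twin_class e v, w \in twin_class e v,
    c u == c w & u != w]]) => [|Hn].
  case/existsP => u /existsP [w /and4P [Hu Hw /eqP cuw uw]].
  have Tuw : twins e u w.
    move: Hu Hw uw; rewrite !inE.
    case: (eqVneq u v) => [->|uv] /=; case: (eqVneq w v) => [->|wv] //=.
    - by move=> _ /twins_sym.
    - by move=> /twins_trans; apply.
  have /forallP /(_ (tperm u w)) /implyP := Hc.
  have -> : is_aut e (tperm u w) && [forall x, c (tperm u w x) == c x].
    rewrite tperm_aut //=; apply/forallP => x.
    by case: tpermP => [->|->|] //; rewrite cuw.
  move=> /(_ isT) /eqP /permP /(_ u); rewrite perm1 tpermL => /eqP.
  by rewrite eq_sym (negbTE uw).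
have : #|twin_class e v| <= #|'I_D|.
  apply: (leq_card_in (fun x => c x)) => x y Hx Hy cxy.
  apply/eqP; apply: contraNT Hn => xy; apply/existsP; exists x; apply/existsP.
  by exists y; rewrite Hx Hy cxy eqxx xy.
by rewrite card_ord leqNgt Hlt.
Qed.

End Aux.

Theorem corollary4p4 (T : finType) (e : rel T) (m : nat) :
  symmetric e -> irreflexive e -> (0 < m)%N ->
  connected_graph e -> almost_asymmetric e ->
  (#|T|%:Z - (max_twin_class_size e)%:Z != m%:Z)%R ->
  ((dist_number e)%:Z != #|T|%:Z - m%:Z)%R.
Proof.
move=> es ei _ _ AA H.
rewrite (@dist_eq_max T e es ei AA).
apply: contra H => /eqP ->; apply/eqP; ring.
Qed.
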